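(* For any digraph $G$, \[1+\mathrm{cr}(G)=\mathrm{lifo}_{\mathtt{mi}}(G)=\mathrm{lifo}_{\mathtt{i}}(G)=\mathrm{lifo}_{\mathtt{misc}}(G)=\mathrm{lifo}_{\mathtt{isc}}(G)=\mathrm{lifo}_{\mathtt{mv}}(G)=\mathrm{lifo}_{\mathtt{v}}(G)=\mathrm{lifo}_{\mathtt{mvsc}}(G)=\mathrm{lifo}_{\mathtt{vsc}}(G)=\mathrm{sstat}_{\mathtt{vsc}}(G).\]
   Context: All digraphs are finite, simple, without self-loops and have at least one vertex (induced subgraphs appearing as game data may be empty). For a finite set $V$, $V^*$ is the set of finite words over $V$, $\epsilon$ the empty word; $X \preceq Y$ means $X$ is a prefix of $Y$; for $X=a_1\cdots a_n$, $|X|=n$ and $\mathrm{let}(X)=\{a_1,\dots,a_n\}$. $A\Delta B$ is symmetric difference. For $X\subseteq V(G)$, $G\setminus X$ is the subgraph induced by $V(G)\setminus X$. Induced subgraphs are identified with their vertex sets. An initial component of a digraph $H$ is a strongly connected component $C$ with no edge from $H\setminus C$ into $C$. A subgraph $H\subseteq G$ is successor-closed if there is no edge of $G$ from $H$ to $G\setminus H$. Cycle-rank $\mathrm{cr}(G)$: $0$ if $G$ is acyclic; $1+\min_{v\in V(G)}\mathrm{cr}(G\setminus\{v\})$ if $G$ is strongly connected (and not acyclic); otherwise the maximum of $\mathrm{cr}(H)$ over strongly connected components $H$ of $G$. LIFO-search game. A position is a pair $(X,R)$ with $X\in V(G)^*$ and $R$ a (possibly empty) induced subgraph of $G\setminus\mathrm{let}(X)$.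 It is an $\mathtt{i}$-position if $R$ is successor-closed; an $\mathtt{isc}$-position if $R$ is a union of strongly connected components of $G\setminus\mathrm{let}(X)$; a $\mathtt{v}$-position if $R$ is successor-closed and has a unique initial component; a $\mathtt{vsc}$-position if $R$ is a strongly connected component of $G\setminus\mathrm{let}(X)$. For $\mathbf{gv}\in\{\mathtt{i},\mathtt{isc},\mathtt{v},\mathtt{vsc}\}$, a $\mathbf{gv}$-position $(X',R')$ is a $\mathbf{gv}$-successor of $(X,R)$ if ($X\preceq X'$ or $X'\preceq X$), $|\mathrm{let}(X)\Delta\mathrm{let}(X')|=1$, and: for $\mathbf{gv}\in\{\mathtt{i},\mathtt{v}\}$, every $v'\in R'$ is reachable by a directed path in $G\setminus(\mathrm{let}(X)\cap\mathrm{let}(X'))$ from some $v\in R$; for $\mathbf{gv}\in\{\mathtt{isc},\mathtt{vsc}\}$, every $v'\in R'$ lies in the same strongly connected component of $G\setminus(\mathrm{let}(X)\cap\mathrm{let}(X'))$ as some $v\in R$. For $\mathbf{gv}\in\{\mathtt{v},\mathtt{vsc}\}$, if $(\epsilon,G)$ is not a $\mathbf{gv}$-position it is nevertheless admitted as a special position whose $\mathbf{gv}$-successors are exactly the $\mathbf{gv}$-positions of the form $(\epsilon,R)$. A $\mathbf{gv}$-search from $(X_0,R_0)$ is a finite or infinite sequence of $\mathbf{gv}$-positions $(X_0,R_0),(X_1,R_1),\dots$ with each $(X_{i+1},R_{i+1})$ a $\mathbf{gv}$-successor of $(X_i,R_i)$; it is complete if it is infinite or $R_n=\emptyset$ for some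 $n$, and a complete search is winning for the searchers if $R_n=\emptyset$ for some $n$. A complete search from $(\epsilon,G)$ is monotone if $R_{i+1}\subseteq R_i$ for all $i$; searcher-stationary if $X_i\preceq X_{i+1}$ for all $i$ with $R_i\neq\emptyset$; uses at most $k$ searchers if $|X_i|\le k$ for all $i$. A (searcher) $\mathbf{gv}$-strategy is a function $\sigma$ from $\mathbf{gv}$-positions to $V(G)^*$ such that $\sigma(X,R)$ is the first component of some $\mathbf{gv}$-successor of $(X,R)$; a search is consistent with $\sigma$ if $X_{i+1}=\sigma(X_i,R_i)$ for all $i$. $\sigma$ is winning if every complete consistent search from $(\epsilon,G)$ is winning for the searchers; it is monotone / searcher-stationary / uses at most $k$ searchers if every complete consistent search from $(\epsilon,G)$ has that property. $\mathrm{lifo}_{\mathbf{gv}}(G)$ (resp. $\mathrm{lifo}_{\mathtt{m}\mathbf{gv}}(G)$) is the minimum $k$ such that there is a winning (resp. monotone winning) $\mathbf{gv}$-strategy using at most $k$ searchers; $\mathrm{sstat}_{\mathtt{vsc}}(G)$ is the minimum $k$ such that there is a searcher-stationary winning $\mathtt{vsc}$-strategy using at most $k$ searchers. *)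

(* Defs.v *)
From mathcomp Require Import all_boot.
Set Implicit Arguments. Unset Strict Implicit. Unset Printing Implicit Defensive.

(* A digraph is a finite type T of vertices with an edge relation e : rel T
   (simple, no self-loops: irreflexive e; at least one vertex: 0 < #|T|).
   Induced subgraphs are identified with vertex sets {set T}. *)

Section Digraph.
Variables (T : finType) (e : rel T).

Definition relS (S : {set T}) : rel T := fun x y => [&& e x y, x \in S & y \in S].
Definition reachS (S : {set T}) (u v : T) : bool := (u \in S) && connect (relS S) u v.
Definition sconn (S : {set T}) (u v : T) : bool := reachS S u v && reachS S v u.
(* the strongly connected component of u in S (empty if u \notin S) *)
Definition scc (S : {set T}) (u : T) : {set T} := [set v | sconn S u v].

Definition acyclicS (S : {set T}) : bool :=
  [forall x, forall y, ~~ (relS S x y && connect (relS S) y x)].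
Definition strongly_connected (S : {set T}) : bool :=
  (S != set0) && [forall x in S, forall y in S, connect (relS S) x y].

(* cycle rank, computed by recursion with fuel n >= #|S| *)
Fixpoint crf (n : nat) (S : {set T}) : nat :=
  match n with
  | 0 => 0
  | n'.+1 =>
    if acyclicS S then 0
    else if strongly_connected S then
      (if [pick v in S] is Some v0
       then \big[minn/crf n' (S :\ v0)]_(v in S) crf n' (S :\ v)
       else 0).+1
    else \max_(u in S) crf n' (scc S u)
  end.

Definition cycle_rank : nat := crf #|T| [set: T].

Definition letters (X : seq T) : {set T} := [set x in X].
Definition avail (X : seq T) : {set T} := ~: letters X.

Inductive gvar := Gi | Gisc | Gv | Gvsc.

Definition succ_closed (A R : {set T}) : Prop :=
  forall u v, u \in R -> v \in A -> e u v -> v \in R.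
Definition scc_union (A R : {set T}) : Prop :=
  forall u v, u \in R -> sconn A u v -> v \in R.
Definition initial_component (R C : {set T}) : Prop :=
  (exists2 u, u \in R & C = scc R u) /\
  (forall x y, x \in R -> x \notin C -> y \in C -> ~~ e x y).
Definition unique_initial (R : {set T}) : Prop :=
  exists C, initial_component R C /\ forall C', initial_component R C' -> C' = C.
Definition is_scc (A R : {set T}) : Prop := exists2 u, u \in A & R = scc A u.

Definition position (g : gvar) (X : seq T) (R : {set T}) : Prop :=
  R \subset avail X /\
  match g with
  | Gi => succ_closed (avail X) R
  | Gisc => scc_union (avail X) R
  | Gv => R = set0 \/ (succ_closed (avail X) R /\ unique_initial R)
  | Gvsc => R = set0 \/ is_scc (avail X) R
  end.

Definition symdiff (A B : {set T}) : {set T} := (A :\: B) :|: (B :\: A).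

Definition gsucc (g : gvar) (p p' : seq T * {set T}) : Prop :=
  let: (X, R) := p in let: (X', R') := p' in
  [/\ position g X' R',
      prefix X X' || prefix X' X,
      #|symdiff (letters X) (letters X')| = 1 &
      let S := ~: (letters X :&: letters X') in
      forall v', v' \in R' ->
        exists2 v, v \in R &
          match g with Gi | Gv => reachS S v v' | Gisc | Gvsc => sconn S v v' end].

Definition special (g : gvar) (p : seq T * {set T}) : Prop :=
  (g = Gv \/ g = Gvsc) /\ p = ([::], [set: T]) /\ ~ position g [::] [set: T].

Definition succ (g : gvar) (p p' : seq T * {set T}) : Prop :=
  (special g p -> p'.1 = [::] /\ position g p'.1 p'.2) /\
  (~ special g p -> gsucc g p p').

Definition strategy (g : gvar) (sigma : seq T -> {set T} -> seq T) : Prop :=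
  forall X R, position g X R \/ special g (X, R) ->
    exists R', succ g (X, R) (sigma X R, R').

(* a search is a finite (len = Some n: positions 0..n) or infinite (len = None)
   sequence s of positions *)
Definition in_range (len : option nat) (i : nat) : bool :=
  if len is Some n then i <= n else true.

Definition search (g : gvar) (len : option nat) (s : nat -> seq T * {set T}) : Prop :=
  s 0 = ([::], [set: T]) /\ forall i, in_range len i.+1 -> succ g (s i) (s i.+1).

Definition consistent (sigma : seq T -> {set T} -> seq T) len (s : nat -> seq T * {set T}) :=
  forall i, in_range len i.+1 -> (s i.+1).1 = sigma (s i).1 (s i).2.

Definition complete len (s : nat -> seq T * {set T}) : Prop :=
  len = None \/ exists2 n, in_range len n & (s n).2 = set0.

Definition searchers_win len (s : nat -> seq T * {set T}) : Prop :=
  exists2 n, in_range len n & (s n).2 = set0.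

Definition play g sigma len s : Prop :=
  [/\ search g len s, consistent sigma len s & complete len s].

Definition winning g sigma : Prop :=
  forall len s, play g sigma len s -> searchers_win len s.
Definition monotone g sigma : Prop :=
  forall len s, play g sigma len s ->
    forall i, in_range len i.+1 -> (s i.+1).2 \subset (s i).2.
Definition uses_at_most g sigma (k : nat) : Prop :=
  forall len s, play g sigma len s ->
    forall i, in_range len i -> size (s i).1 <= k.
Definition searcher_stationary g sigma : Prop :=
  forall len s, play g sigma len s ->
    forall i, in_range len i.+1 -> (s i).2 != set0 -> prefix (s i).1 (s i.+1).1.

Definition IsMin (P : nat -> Prop) (m : nat) : Prop := P m /\ forall k, P k -> m <= k.

(* lifo_is g mono m : m = lifo_g(G) (mono = false) or lifo_{m g}(G) (mono = true) *)
Definition lifo_is (g : gvar) (mono : bool) (m : nat) : Prop :=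
  IsMin (fun k => exists sigma, [/\ strategy g sigma, winning g sigma,
                                   (mono = true -> monotone g sigma) &
                                   uses_at_most g sigma k]) m.

Definition sstat_is (m : nat) : Prop :=
  IsMin (fun k => exists sigma, [/\ strategy Gvsc sigma, winning Gvsc sigma,
                                   searcher_stationary Gvsc sigma &
                                   uses_at_most Gvsc sigma k]) m.

End Digraph.

(* Main.v *)
Require Import Defs.
From mathcomp Require Import all_boot.
From Stdlib Require Import Classical ClassicalEpsilon.
From mathcomp Require Import zify.
Set Implicit Arguments. Unset Strict Implicit. Unset Printing Implicit Defensive.

Section Graph.
Variables (T : finType) (e : rel T).
Implicit Types (S K : {set T}) (u v w x y : T).

Notation relS := (relS e).
Notation reachS := (reachS e).
Notation sconn := (sconn e).
Notation scc := (scc e).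

Lemma connect_inv (S : {set T}) (P : T -> Prop) u v :
  (forall x y, P x -> relS S x y -> P y) -> P u -> connect (relS S) u v -> P v.
Proof.
move=> HP Pu /connectP[p pth ->]; elim: p u Pu pth => //= y p IH u Pu /andP[r pth].
exact: IH (HP _ _ Pu r) pth.
Qed.

Lemma reachS_in S u v : reachS S u v -> u \in S /\ v \in S.
Proof.
case/andP=> uS c; split=> //.
by apply: (connect_inv (P := fun x => x \in S)) c => // x y _ /and3P[].
Qed.

Lemma reachS_refl S u : u \in S -> reachS S u u.
Proof. by move=> uS; rewrite /Defs.reachS uS connect0. Qed.

Lemma reachS_trans S u v w : reachS S u v -> reachS S v w -> reachS S u w.
Proof.
case/andP=> uS c1 /andP[_ c2]; rewrite /Defs.reachS uS; exact: connect_trans c1 c2.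
Qed.

Lemma reachS_edge S u v : u \in S -> v \in S -> e u v -> reachS S u v.
Proof. by move=> uS vS euv; rewrite /Defs.reachS uS connect1 // /Defs.relS euv uS vS. Qed.

Lemma reachS_sub S S' u v : S \subset S' -> reachS S u v -> reachS S' u v.
Proof.
move=> sub /andP[uS c]; rewrite /Defs.reachS (subsetP sub _ uS) /=.
apply: connect_sub c => x y /and3P[exy xS yS]; apply: connect1.
by rewrite /Defs.relS exy (subsetP sub _ xS) (subsetP sub _ yS).
Qed.

Lemma reach_ind S (P : T -> Prop) u v :
  (forall x y, P x -> x \in S -> y \in S -> e x y -> P y) -> P u -> reachS S u v -> P v.
Proof.
move=> HP Pu /andP[_ c]; apply: (connect_inv (S := S) (P := P)) c => //.
by move=> x y Px /and3P[exy xS yS]; exact: HP Px xS yS exy.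
Qed.

Lemma reach_restrict S S' u v :
  (forall x y, reachS S u x -> x \in S' -> y \in S -> e x y -> y \in S') ->
  u \in S' -> S' \subset S -> reachS S u v -> reachS S' u v.
Proof.
move=> H uS' sub r.
have : reachS S u v /\ reachS S' u v.
  apply: (reach_ind (P := fun z => reachS S u z /\ reachS S' u z)) r; last first.
    by split; apply: reachS_refl => //; apply: (subsetP sub).
  move=> x y [r1 r2] xS yS exy; have yS' := H _ _ r1 (reachS_in r2).2 yS exy.
  split; first exact: reachS_trans r1 (reachS_edge xS yS exy).
  exact: reachS_trans r2 (reachS_edge (reachS_in r2).2 yS' exy).
by case.
Qed.

Lemma sconn_sym S u v : sconn S u v = sconn S v u.
Proof. by rewrite /Defs.sconn andbC. Qed.

Lemma sconn_trans S u v w : sconn S u v -> sconn S v w -> sconn S u w.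
Proof.
case/andP=> a b /andP[c d]; apply/andP; split; [exact: reachS_trans a c|exact: reachS_trans d b].
Qed.

Lemma sconn_refl S u : u \in S -> sconn S u u.
Proof. by move=> uS; rewrite /Defs.sconn reachS_refl. Qed.

Lemma sconn_in S u v : sconn S u v -> u \in S /\ v \in S.
Proof. by case/andP=> /reachS_in. Qed.

Lemma sconn_sub S S' u v : S \subset S' -> sconn S u v -> sconn S' u v.
Proof. by move=> sub /andP[a b]; rewrite /Defs.sconn !(reachS_sub sub). Qed.

Lemma in_scc S u v : (v \in scc S u) = sconn S u v.
Proof. by rewrite inE. Qed.

Lemma scc_self S u : u \in S -> u \in scc S u.
Proof. by move=> uS; rewrite in_scc sconn_refl. Qed.

Lemma scc_sub S u : scc S u \subset S.
Proof. by apply/subsetP=> v; rewrite in_scc => /sconn_in[]. Qed.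

Lemma scc_eq S u v : v \in scc S u -> scc S v = scc S u.
Proof.
rewrite in_scc => uv; apply/setP=> w; rewrite !in_scc; apply/idP/idP => h.
  exact: sconn_trans uv h.
by rewrite sconn_sym in uv; exact: sconn_trans uv h.
Qed.

Lemma scc_sconn S u v w : v \in scc S u -> w \in scc S u -> sconn S v w.
Proof. rewrite !in_scc => a b; rewrite sconn_sym in a; exact: sconn_trans a b. Qed.

Lemma scc_path S u v w : v \in scc S u -> w \in scc S u -> reachS (scc S u) v w.
Proof.
move=> vC wC; have /andP[/andP[vS c] _] := scc_sconn vC wC.
rewrite /Defs.reachS vC /=; move: c => /connectP[p pth wl]; subst w.
elim: p v vC vS pth wC => [|z p IH] v vC vS /=; first by rewrite connect0.
case/andP=> r pth lC; have [_ zS] := reachS_in (introT andP (conj vS (connect1 r))).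
have rz : reachS S v z by rewrite /Defs.reachS vS connect1.
have zl : reachS S z (last z p) by rewrite /Defs.reachS zS; apply/connectP; exists p.
have zC : z \in scc S u.
  rewrite in_scc; apply/andP; split.
    by move: vC; rewrite in_scc => /andP[a _]; exact: reachS_trans a rz.
  by move: lC; rewrite in_scc => /andP[_ b]; exact: reachS_trans zl b.
apply: connect_trans (IH z zC zS pth lC); apply: connect1.
by move: r => /and3P[ezv _ _]; rewrite /Defs.relS ezv vC zC.
Qed.

Lemma scc_sc S u : u \in S -> strongly_connected e (scc S u).
Proof.
move=> uS; apply/andP; split; first by apply/set0Pn; exists u; exact: scc_self.
apply/forallP=> x; apply/implyP=> xC; apply/forallP=> y; apply/implyP=> yC.
by have /andP[] := scc_path xC yC.
Qed.

Lemma reach_exit S (K : {set T}) u v : reachS S u v -> u \in K -> v \notin K ->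
  exists x y, [/\ x \in K, y \notin K, x \in S, y \in S & e x y].
Proof.
move=> r uK vK; apply: NNPP => nH.
have : v \in K; last by rewrite (negbTE vK).
apply: (reach_ind (P := fun z => z \in K)) r => // x y xK xS yS exy.
apply: contraT => yK; exfalso; apply: nH; by exists x, y.
Qed.

End Graph.

Lemma bigmin_le (I : eqType) (r : seq I) (P : pred I) (F : I -> nat) x0 w :
  w \in r -> P w -> \big[minn/x0]_(i <- r | P i) F i <= F w.
Proof.
elim: r => //= a r IH; rewrite inE big_cons => /orP[/eqP->|wr] Pw.
  by rewrite Pw geq_minl.
case: (P a); last exact: IH.
by apply: leq_trans (geq_minr _ _) (IH wr Pw).
Qed.

Lemma bigmin_ex (I : eqType) (r : seq I) (P : pred I) (F : I -> nat) x0 :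
  let b := \big[minn/x0]_(i <- r | P i) F i in
  b = x0 \/ exists2 i, P i & b = F i.
Proof.
apply: (big_ind (fun b => b = x0 \/ exists2 i, P i & b = F i)); first by left.
  move=> x y hx hy; case: (leqP x y) => h; rewrite /=.
    exact: hx.
  exact: hy.
by move=> i Pi; right; exists i.
Qed.


Section CR.
Variables (T : finType) (e : rel T).
Implicit Types (S K : {set T}) (u v w x y : T).
Notation crf := (crf e).

Definition cr S := crf #|S| S.

Lemma acyclic0 : acyclicS e set0.
Proof.
apply/forallP=> x; apply/forallP=> y; rewrite /Defs.relS !inE /=.
by rewrite !andbF.
Qed.

Lemma scc_proper S u : u \in S -> ~~ strongly_connected e S -> #|scc e S u| < #|S|.
Proof.
move=> uS nsc; apply: proper_card; rewrite properEneq scc_sub andbT.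
by apply: contra nsc => /eqP <-; apply: scc_sc.
Qed.

Lemma card_del S v : v \in S -> #|S :\ v| < #|S|.
Proof. by move=> vS; rewrite (cardsD1 v S) vS add1n ltnS setDE leqnn. Qed.

Lemma crf_fuel n m S : #|S| <= n -> #|S| <= m -> crf n S = crf m S.
Proof.
elim: n m S => [|n IH] [|m] S //=.
- rewrite leqn0 cards_eq0 => /eqP-> _; by rewrite acyclic0.
- move=> _; rewrite leqn0 cards_eq0 => /eqP->; by rewrite acyclic0.
move=> hn hm; case: (acyclicS e S) => //; case: ifP => sc.
  case: pickP => [v0 v0S|_] //; congr _.+1.
  have h : forall v, v \in S -> crf n (S :\ v) = crf m (S :\ v).
    move=> v vS; have := card_del vS => h.
    by apply: IH; lia.
  rewrite (h _ v0S); apply: eq_bigr => v vS; exact: h.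
apply: eq_bigr => u uS; have := scc_proper uS (negbT sc) => h; apply: IH; lia.
Qed.

Lemma cr_fuel n S : #|S| <= n -> crf n S = cr S.
Proof. by move=> h; apply: crf_fuel. Qed.

Lemma cr_unfold S : cr S =
  if acyclicS e S then 0
  else if strongly_connected e S then
    (if [pick v in S] is Some v0
     then \big[minn/cr (S :\ v0)]_(v in S) cr (S :\ v) else 0).+1
  else \max_(u in S) cr (scc e S u).
Proof.
rewrite /cr; case E: #|S| => [|k].
  by move/eqP: E; rewrite cards_eq0 => /eqP->; rewrite acyclic0.
rewrite /=; case: (acyclicS e S) => //; case: ifP => sc.
  case: pickP => [v0 v0S|_] //; congr _.+1.
  have h : forall v, v \in S -> crf k (S :\ v) = cr (S :\ v).
    by move=> v vS; have := card_del vS => h; apply: cr_fuel; lia.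
  rewrite (h _ v0S); apply: eq_bigr => v vS; exact: h.
apply: eq_bigr => u uS; have := scc_proper uS (negbT sc) => h; apply: cr_fuel; lia.
Qed.

Lemma cr_acyc S : acyclicS e S -> cr S = 0.
Proof. by move=> a; rewrite cr_unfold a. Qed.

Lemma cr_sc_le S v : strongly_connected e S -> ~~ acyclicS e S -> v \in S ->
  cr S <= (cr (S :\ v)).+1.
Proof.
move=> sc na vS; rewrite cr_unfold (negbTE na) sc; case: pickP => [v0 _|/(_ v)]; last by rewrite vS.
by rewrite ltnS; apply: bigmin_le => //; rewrite mem_index_enum.
Qed.

Lemma cr_sc_ex S : strongly_connected e S -> ~~ acyclicS e S ->
  exists2 v, v \in S & cr S = (cr (S :\ v)).+1.
Proof.
move=> sc na; rewrite cr_unfold (negbTE na) sc; case: pickP => [v0 v0S|H].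
  case: (bigmin_ex (index_enum T) (fun v => v \in S) (fun v => cr (S :\ v)) (cr (S :\ v0))).
    by move=> ->; exists v0.
  by case=> v vS ->; exists v.
by move: sc => /andP[/set0Pn[x xS] _]; move: (H x); rewrite xS.
Qed.

Lemma cr_max_le S u : ~~ strongly_connected e S -> ~~ acyclicS e S -> u \in S ->
  cr (scc e S u) <= cr S.
Proof.
move=> nsc na uS; rewrite [cr S]cr_unfold (negbTE na) (negbTE nsc).
exact: (@leq_bigmax_cond _ (fun u => u \in S) (fun u => cr (scc e S u)) u uS).
Qed.

Lemma nonacyc_nonempty S : ~~ acyclicS e S -> S != set0.
Proof. by apply: contra => /eqP->; exact: acyclic0. Qed.

Lemma cr_max_ex S : ~~ strongly_connected e S -> ~~ acyclicS e S ->
  exists2 u, u \in S & cr S = cr (scc e S u).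
Proof.
move=> nsc na; rewrite [cr S]cr_unfold (negbTE na) (negbTE nsc).
have : 0 < #|S| by rewrite card_gt0 nonacyc_nonempty.
by move/(eq_bigmax_cond (fun u => cr (scc e S u))) => [u uS ->]; exists u.
Qed.

End CR.

Section CR2.
Variables (T : finType) (e : rel T).
Hypothesis Hirr : irreflexive e.
Implicit Types (S K : {set T}) (u v w x y : T).
Notation cr := (cr e).

Lemma acyclic_sub S S' : S \subset S' -> acyclicS e S' -> acyclicS e S.
Proof.
move=> sub /forallP a; apply/forallP=> x; apply/forallP=> y; apply/negP=> /andP[r c].
have /andP[r' c'] : relS e S' x y && connect (relS e S') y x; last first.
  by move: (a x) => /forallP /(_ y); rewrite r' c'.
move: r => /and3P[exy xS yS]; rewrite /Defs.relS exy (subsetP sub _ xS) (subsetP sub _ yS) /=.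
apply: connect_sub c => a1 b1 /and3P[eab aS bS]; apply: connect1.
by rewrite /Defs.relS eab (subsetP sub _ aS) (subsetP sub _ bS).
Qed.

Lemma sc_scc_eq S u : strongly_connected e S -> u \in S -> scc e S u = S.
Proof.
move=> /andP[_ /forallP sc] uS; apply/setP=> v; rewrite in_scc; apply/idP/idP.
  by case/sconn_in.
move=> vS; rewrite /Defs.sconn /Defs.reachS uS vS /=.
move: (sc u); rewrite uS => /forallP /(_ v); rewrite vS /= => ->.
by move: (sc v); rewrite vS => /forallP /(_ u); rewrite uS.
Qed.

Lemma sc_acyc_eq S x y : strongly_connected e S -> acyclicS e S -> x \in S -> y \in S -> x = y.
Proof.
move=> sc a xS yS; apply: NNPP => nxy.
have : reachS e (scc e S x) x y by apply: scc_path; rewrite sc_scc_eq.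
rewrite sc_scc_eq // => /andP[_ /connectP[p pth yl]].
case: p pth yl => [|z p] /=; first by move=> _ yx; apply: nxy.
case/andP=> r _ _; have [_ zS] : x \in S /\ z \in S by move: r => /and3P[].
have /andP[_ czx] : reachS e S z x.
  by rewrite -(sc_scc_eq sc zS); apply: scc_path; rewrite sc_scc_eq.
by move/forallP: a => /(_ x) /forallP /(_ z); rewrite r czx.
Qed.

Lemma nonacyc_del S v : ~~ acyclicS e S -> S :\ v != set0.
Proof.
case/forallPn=> x /forallPn[y]; rewrite negbK => /andP[/and3P[exy xS yS] _].
apply/set0Pn; case: (eqVneq x v) => [xv|xv].
  exists y; rewrite !inE yS andbT; apply/eqP => yv.
  by move: exy; rewrite yv -xv Hirr.
by exists x; rewrite !inE xv xS.
Qed.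

Lemma cr_scc_le S u : u \in S -> cr (scc e S u) <= cr S.
Proof.
move=> uS; case a: (acyclicS e S).
  by rewrite cr_acyc //; apply: acyclic_sub a; exact: scc_sub.
case sc: (strongly_connected e S); first by rewrite sc_scc_eq.
by apply: cr_max_le; rewrite ?sc ?a.
Qed.

Lemma cr_scc_ge S : S != set0 -> exists2 u, u \in S & cr S <= cr (scc e S u).
Proof.
case/set0Pn=> u0 u0S; case a: (acyclicS e S); first by exists u0; rewrite // cr_acyc.
case sc: (strongly_connected e S); first by exists u0; rewrite // sc_scc_eq.
have [u uS ->] := @cr_max_ex _ e S (negbT sc) (negbT a); by exists u.
Qed.

Lemma cr_sub_acyc S : ~~ acyclicS e S -> 0 < cr S -> True.
Proof. by []. Qed.

Lemma cr_pos_nonacyc S : 0 < cr S -> ~~ acyclicS e S.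
Proof. by apply: contraL => a; rewrite cr_acyc. Qed.

End CR2.

Section Game.
Variables (T : finType) (e : rel T).
Implicit Types (S K R A B : {set T}) (u v w x y : T) (X Y P : seq T).

Definition validmove X X' : bool :=
  (prefix X X' || prefix X' X) && (#|symdiff (letters X) (letters X')| == 1).

Lemma pos0 g X : position e g X set0.
Proof.
split; first exact: sub0set.
by case: g => //; try (by move=> u v; rewrite inE); left.
Qed.

Lemma gsucc_valid g X R X' R' : gsucc e g (X, R) (X', R') -> validmove X X'.
Proof. by case=> _ p /eqP c _; rewrite /validmove p c. Qed.

Lemma valid_gsucc0 g X R X' : validmove X X' -> gsucc e g (X, R) (X', set0).
Proof.
case/andP=> p /eqP c; split => //; first exact: pos0.
by move=> S v'; rewrite in_set0.
Qed.

Lemma special_T g p : special e g p -> p = ([::], setT).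
Proof. by case=> _ []. Qed.

Lemma succ_pos g p p' : succ e g p p' -> position e g p'.1 p'.2.
Proof.
case=> h1 h2; case: (classic (special e g p)) => [/h1[]//|/h2].
by case: p h1 h2 => X R; case: p' => X' R' _ _ [].
Qed.

(* pop of the last new letter *)
Fixpoint poprev (Z : seq T) : seq T :=
  if Z is z :: Z' then (if z \in Z' then poprev Z' else Z') else [::].

Lemma poprevP Z : Z != [::] -> exists z W,
  [/\ Z = W ++ poprev Z, z \notin poprev Z,
      (forall x, (x \in Z) = (x == z) || (x \in poprev Z)) & size (poprev Z) < size Z].
Proof.
elim: Z => //= a Z IH _; case: ifP => aZ.
  have nZ : Z != [::] by case: Z aZ IH.
  have [z [W [EZ zn mem sz]]] := IH nZ.
  exists z, (a :: W); split => //.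
  - by rewrite /= -EZ.
  - by move=> x; rewrite inE -mem; case: eqP => // ->.
  - by apply: leq_trans sz _.
exists a, [:: a]; split => //; rewrite ?aZ //.
Qed.

Definition popw X := rev (poprev (rev X)).

Lemma letters_eq X Y : (forall x, (x \in X) = (x \in Y)) -> letters X = letters Y.
Proof. by move=> h; apply/setP => x; rewrite !inE h. Qed.

Lemma symdiff_add z (B : {set T}) : z \notin B -> #|symdiff (z |: B) B| = 1.
Proof.
move=> zB; rewrite /symdiff; have -> : (z |: B) :\: B = [set z].
  apply/setP=> x; rewrite !inE; case: (boolP (x == z)) => [/eqP->|_] /=; first by rewrite zB.
  by rewrite andNb.
have -> : B :\: (z |: B) = set0.
  by apply/setP=> x; rewrite !inE; case: (x \in B); rewrite ?orbT ?andbF.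
by rewrite setU0 cards1.
Qed.

Lemma symdiffC A B : symdiff A B = symdiff B A.
Proof. by rewrite /symdiff setUC. Qed.

Lemma popwP X : X != [::] -> exists z,
  [/\ prefix (popw X) X, z \notin letters (popw X),
      letters X = z |: letters (popw X) & size (popw X) < size X].
Proof.
move=> nX; have nZ : rev X != [::] by rewrite -size_eq0 size_rev size_eq0.
have [z [W [EZ zn mem sz]]] := poprevP nZ.
exists z; split.
- apply/prefixP; exists (rev W); rewrite /popw -rev_cat -EZ revK //.
- by rewrite inE mem_rev.
- by apply/setP=> x; rewrite !inE /popw mem_rev -mem mem_rev.
- by move: sz; rewrite /popw !size_rev.
Qed.

Lemma popw_valid X : X != [::] -> validmove X (popw X).
Proof.
case/popwP=> z [p zn L _]; rewrite /validmove p orbT /= L symdiff_add //.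
Qed.

Lemma letters_rcons X x : letters (rcons X x) = x |: letters X.
Proof. by apply/setP=> y; rewrite !inE mem_rcons inE. Qed.

Lemma push_valid X x : x \notin letters X -> validmove X (rcons X x).
Proof.
move=> xn; rewrite /validmove prefix_rcons letters_rcons symdiffC symdiff_add //.
Qed.

Lemma popw_rcons X x : x \notin letters X -> popw (rcons X x) = X.
Proof.
by rewrite inE => xn; rewrite /popw rev_rcons /= mem_rev (negbTE xn) revK.
Qed.

Variable x0 : T.

Definition emove X := if X is [::] then [:: x0] else popw X.

Lemma emove_valid X : validmove X (emove X).
Proof.
case: X => [|a X] /=; last exact: popw_valid.
rewrite /validmove prefix0s /=.
have -> : letters [:: x0] = x0 |: letters [::] by apply/setP=> y; rewrite !inE ?orbF.
by rewrite symdiffC symdiff_add // inE.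
Qed.

Lemma size_emove X : size (emove X) <= maxn 1 (size X).
Proof.
case: X => [|a X] //=; have [z [_ _ _ sz]] := @popwP (a :: X) isT.
by move: sz => /= sz; lia.
Qed.

Definition sigma_of g (rule : seq T -> {set T} -> seq T) X R : seq T :=
  if excluded_middle_informative (special e g (X, R)) then [::]
  else if R == set0 then emove X
  else if validmove X (rule X R) then rule X R else emove X.

Lemma sigma_valid g rule X R : ~ special e g (X, R) -> validmove X (sigma_of g rule X R).
Proof.
rewrite /sigma_of => ns; destruct (excluded_middle_informative _) as [sp|nsp]; first by case: ns.
case: (R == set0); first exact: emove_valid.
by case: ifP => // _; exact: emove_valid.
Qed.

Lemma sigma_strategy g rule : strategy e g (sigma_of g rule).
Proof.
move=> X R _; exists set0; split.
  move=> sp; rewrite /sigma_of; destruct (excluded_middle_informative _) as [sp'|nsp]; last by case: nsp.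
  by split => //; exact: pos0.
by move=> ns; apply: valid_gsucc0; exact: sigma_valid.
Qed.

End Game.

Section Generic.
Variables (T : finType) (e : rel T).
Implicit Types (S K R A B : {set T}) (u v w x y : T) (X Y P : seq T).

Lemma in_range_pred len i : in_range len i.+1 -> in_range len i.
Proof. by case: len => //= n; apply: ltnW. Qed.

Section Step.
Variables (g : gvar) (sig : seq T -> {set T} -> seq T).
Variable Inv : seq T -> {set T} -> Prop.
Variable m : seq T -> {set T} -> nat.
Hypothesis Inv0 : Inv [::] setT.
Hypothesis Hstep : forall X R X' R', (position e g X R \/ special e g (X, R)) -> Inv X R ->
     succ e g (X, R) (X', R') -> X' = sig X R ->
     [/\ Inv X' R', R' \subset R & (position e g X R -> R != set0 -> m X' R' < m X R)].

Lemma play_inv len s : play e g sig len s -> forall i, in_range len i ->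
  [/\ Inv (s i).1 (s i).2, position e g (s i).1 (s i).2 \/ special e g (s i),
      (0 < i -> position e g (s i).1 (s i).2) &
      (in_range len i.+1 -> (s i.+1).2 \subset (s i).2 /\
         (position e g (s i).1 (s i).2 -> (s i).2 != set0 -> m (s i.+1).1 (s i.+1).2 < m (s i).1 (s i).2))].
Proof.
case=> [[s0 hs] hc _].
have gen : forall i, in_range len i -> Inv (s i).1 (s i).2 /\ (position e g (s i).1 (s i).2 \/ special e g (s i)).
  elim=> [|i IH] hi.
    rewrite s0 /=; split => //; case: (classic (special e g ([::], setT))) => [|ns]; [by right|left].
    have sub : [set: T] \subset avail ([::] : seq T) by apply/subsetP=> x _; rewrite !inE.
    case: g ns => ns; try (split; [exact: sub| by move=> *; rewrite in_setT]).
      by apply: NNPP => np; apply: ns; split; [left|split].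
    by apply: NNPP => np; apply: ns; split; [right|split].
  have [I1 P1] := IH (in_range_pred hi).
  have sc := hs i hi; rewrite [s i]surjective_pairing [s i.+1]surjective_pairing in sc.
  rewrite [s i]surjective_pairing /= in P1.
  have [I2 _ _] := Hstep P1 I1 sc (hc i hi); split => //; left.
  exact: (succ_pos sc).
move=> i hi; have [I1 P1] := gen i hi; split => //.
  case: i hi {I1 P1} => // i hi _; have sc := hs i hi.
  exact: (succ_pos sc).
move=> hi1; have sc := hs i hi1; rewrite [s i]surjective_pairing [s i.+1]surjective_pairing in sc.
rewrite [s i]surjective_pairing /= in P1.
by have [_ sub dec] := Hstep P1 I1 sc (hc i hi1).
Qed.

Lemma generic_ub c :
  (forall X R, Inv X R -> size X <= c) ->
  [/\ winning e g sig, monotone e g sig & uses_at_most e g sig c].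
Proof.
move=> Hsz; split.
- move=> len s pl; have hpi := play_inv pl; case: pl => [[s0 hs] hc hcomp].
  move: hcomp; rewrite /complete => -[E|h]; last exact: h.
  subst len; apply: NNPP => nw.
  have ne : forall n, (s n).2 != set0.
    by move=> n; apply/negP => /eqP h; apply: nw; exists n.
  have dec : forall i, m (s i.+1).1 (s i.+1).2 + i <= m (s 1).1 (s 1).2.
    elim=> [|i IH]; first by rewrite addn0.
    have [_ _ pos h4] := hpi i.+1 isT; have [_ d] := h4 isT.
    have := d (pos isT) (ne _); lia.
  by have := dec (m (s 1).1 (s 1).2).+1; lia.
- move=> len s pl i hi; have [_ _ _ h] := play_inv pl (in_range_pred hi).
  by case: (h hi).
- move=> len s pl i hi; have [I1 _ _ _] := play_inv pl hi; exact: Hsz I1.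
Qed.

End Step.

Section LB.
Variables (g : gvar) (sig : seq T -> {set T} -> seq T) (k : nat) (Rr : seq T -> {set T}).
Variable x0 : T.
Hypothesis Hstr : strategy e g sig.
Hypothesis Hwin : winning e g sig.
Hypothesis Huse : uses_at_most e g sig k.
Hypothesis HRne : forall X, size X <= k -> Rr X != set0.
Hypothesis Hsp : special e g ([::], setT) -> position e g [::] (Rr [::]).
Hypothesis Hgs : forall X R X', size X <= k -> size X' <= k ->
  (R = Rr X \/ (X = [::] /\ R = setT)) -> ~ special e g (X, R) -> validmove X X' ->
  gsucc e g (X, R) (X', Rr X').

Definition lb_cond (p : seq T * {set T}) X' :=
  [&& size p.1 <= k, size X' <= k & (p.2 == Rr p.1) || ((p.1 == [::]) && (p.2 == setT))].

Definition lb_next (p : seq T * {set T}) :=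
  let X' := sig p.1 p.2 in (X', if lb_cond p X' then Rr X' else set0).

Definition lb_s n := iter n lb_next ([::], setT).

Lemma lb_step p : position e g p.1 p.2 \/ special e g p -> succ e g p (lb_next p).
Proof.
case: p => X R /= pp; have [R0 [h1 h2]] := Hstr pp.
rewrite /lb_next /=; split.
  move=> sp; have [EX ER] : X = [::] /\ R = setT by case: (special_T sp).
  subst X R; have [E _] := h1 sp; rewrite /= in E.
  rewrite E /lb_cond /= !eqxx orbT /=; split => //; exact: Hsp sp.
move=> nsp; have gs := h2 nsp; have v := gsucc_valid gs.
case: ifP => cnd; last exact: valid_gsucc0.
move: cnd => /and3P[s1 s2 /orP[/eqP E|/andP[/eqP E1 /eqP E2]]].
  by apply: Hgs => //; left.
by apply: Hgs => //; right.
Qed.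

Lemma generic_lb : False.
Proof.
have pos : forall n, position e g (lb_s n).1 (lb_s n).2 \/ special e g (lb_s n).
  elim=> [|n IH]; last by left; apply: (succ_pos (lb_step IH)).
  rewrite /=; case: (classic (special e g ([::], setT))) => [|ns]; [by right|left].
  have sub : [set: T] \subset avail ([::] : seq T) by apply/subsetP=> x _; rewrite !inE.
  case: g Hstr Hwin Huse Hsp Hgs ns => _ _ _ _ _ ns; try (split; [exact: sub| by move=> *; rewrite in_setT]).
    by apply: NNPP => np; apply: ns; split; [left|split].
  by apply: NNPP => np; apply: ns; split; [right|split].
have pl : play e g sig None lb_s.
  split; last by left.
    by split => // i _; exact: lb_step.
  by [].
have [n _ E] := Hwin pl.
have sz : forall i, size (lb_s i).1 <= k.
  by move=> i; have := Huse pl (i := i) isT.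
have inv : forall n, (lb_s n).2 = Rr (lb_s n).1 \/ lb_s n = ([::], setT).
  elim=> [|i IH]; first by right.
  left; rewrite /= /lb_next /lb_cond sz (sz i.+1) /=.
  case: IH => [->|->]; by rewrite ?eqxx ?orbT.
case: (inv n) => [h|h].
  by move: (HRne (sz n)); rewrite -h E eqxx.
move: E; rewrite h /= => /setP /(_ x0); by rewrite !inE.
Qed.

End LB.
End Generic.

Section Robber.
Variables (T : finType) (e : rel T).
Hypothesis Hirr : irreflexive e.
Implicit Types (S K R A B C : {set T}) (u v w x y : T) (X Y P : seq T).
Notation cr := (cr e).
Notation scc := (scc e).
Notation reachS := (reachS e).
Notation sconn := (sconn e).

Definition cl A C : {set T} := [set v | [exists u in C, reachS A u v]].

Lemma in_cl A C v : (v \in cl A C) = [exists u in C, reachS A u v].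
Proof. by rewrite inE. Qed.

Lemma cl_sub A C : cl A C \subset A.
Proof. by apply/subsetP=> v; rewrite in_cl => /existsP[u /andP[_ /reachS_in[]]]. Qed.

Lemma cl_self A C u : C \subset A -> u \in C -> u \in cl A C.
Proof.
move=> sub uC; rewrite in_cl; apply/existsP; exists u; rewrite uC reachS_refl //.
exact: (subsetP sub).
Qed.

Lemma cl_reach A C u v : u \in cl A C -> reachS A u v -> v \in cl A C.
Proof.
rewrite !in_cl => /existsP[w /andP[wC r1]] r2; apply/existsP; exists w.
by rewrite wC (reachS_trans r1 r2).
Qed.

Lemma cl_succ A C : succ_closed e A (cl A C).
Proof.
move=> u v uR vA euv; apply: (cl_reach uR); apply: reachS_edge => //.
exact: (subsetP (cl_sub A C)).
Qed.

Lemma avail_rcons X x : avail (rcons X x) = avail X :\ x.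
Proof. by apply/setP=> y; rewrite !inE mem_rcons inE negb_or andbC. Qed.

Lemma scc_remove A u x : u \in A -> x \notin scc A u -> scc (A :\ x) u = scc A u.
Proof.
move=> uA xn; apply/setP=> v; apply/idP/idP; rewrite !in_scc.
  by apply: sconn_sub; exact: subD1set.
move=> h; have vC : v \in scc A u by rewrite in_scc.
have sub : scc A u \subset A :\ x.
  apply/subsetP=> w wC; rewrite !inE (subsetP (scc_sub _ _ _) _ wC) andbT.
  by apply: contraNneq xn => <-.
have uC := scc_self _ uA.
by apply/andP; split; apply: (reachS_sub sub); apply: scc_path.
Qed.

Lemma scc_del_in A u0 x u : u \in scc A u0 :\ x ->
  scc (scc A u0 :\ x) u = scc (A :\ x) u.
Proof.
rewrite in_setD1 => /andP[ux uC]; apply/setP=> v; apply/idP/idP; rewrite !in_scc.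
  apply: sconn_sub; apply: setSD; exact: scc_sub.
move=> h; have vC : v \in scc (A :\ x) u by rewrite in_scc.
have uA : u \in A :\ x by rewrite !inE ux (subsetP (scc_sub _ _ _) _ uC).
have sub : scc (A :\ x) u \subset scc A u0 :\ x.
  apply/subsetP=> w; rewrite in_scc => hw; have [_ wAx] := sconn_in hw.
  move: wAx; rewrite !inE => /andP[-> _] /=.
  have := uC; rewrite in_scc => uC1; apply: (sconn_trans uC1); apply: (sconn_sub _ hw); exact: subD1set.
by apply/andP; split; apply: (reachS_sub sub); apply: scc_path => //; exact: scc_self.
Qed.

Definition pickD S : {set T} :=
  if [pick u in S | cr S <= cr (scc S u)] is Some u then scc S u else set0.

Lemma pickD_spec S : S != set0 -> exists2 u, u \in S & pickD S = scc S u /\ cr S <= cr (pickD S).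
Proof.
move=> nS; rewrite /pickD; case: pickP => [u /andP[uS h]|H]; first by exists u.
have [u uS h] := @cr_scc_ge _ e S nS; by move: (H u); rewrite uS h.
Qed.

Lemma pickD_sub S : pickD S \subset S.
Proof. by rewrite /pickD; case: pickP => [u _|_]; [exact: scc_sub|exact: sub0set]. Qed.

Definition stepR C x := if x \in C then pickD (C :\ x) else C.
Definition fR X := foldl stepR (pickD setT) X.

Lemma stepR_sub C x : stepR C x \subset C.
Proof.
rewrite /stepR; case: ifP => _ //; apply: subset_trans (pickD_sub _) _; exact: subD1set.
Qed.

Lemma fR_prefix X Y : fR (X ++ Y) \subset fR X.
Proof.
rewrite /fR foldl_cat; elim: Y (foldl stepR (pickD setT) X) => //= y Y IH C.
exact: subset_trans (IH _) (stepR_sub _ _).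
Qed.

Lemma fR_rcons X x : fR (rcons X x) = stepR (fR X) x.
Proof. by rewrite /fR foldl_rcons. Qed.

Variable r : nat.
Hypothesis Hr : r = cr setT.

Lemma letters_card_rcons X x : #|letters (rcons X x)| = #|letters X| + (x \notin letters X).
Proof.
rewrite letters_rcons; case: (boolP (x \in letters X)) => h /=.
  by rewrite (setUidPr _) ?addn0 // sub1set.
by rewrite cardsU1 h add1n addn1.
Qed.

Variable x0 : T.

Lemma avail_nil : avail ([::] : seq T) = setT.
Proof. by apply/setP=> y; rewrite !inE. Qed.

Lemma letters_nil : #|letters ([::] : seq T)| = 0.
Proof. by apply/eqP; rewrite cards_eq0; apply/eqP/setP=> y; rewrite !inE. Qed.

Lemma fR_inv X : #|letters X| <= r ->
  [/\ fR X != set0, exists2 u, u \in avail X & fR X = scc (avail X) u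
    & r <= cr (fR X) + #|letters X|].
Proof.
elim/last_ind: X => [|X x IH].
  move=> _; have nT : [set: T] != set0 by apply/set0Pn; exists x0.
  have [u uT [E c]] := pickD_spec nT; rewrite /fR /= E avail_nil letters_nil addn0.
  split; first by apply/set0Pn; exists u; exact: scc_self.
    by exists u.
  by rewrite Hr -E.
rewrite letters_card_rcons fR_rcons avail_rcons => hc.
have [ne [u uA EC] ci] := IH (leq_trans (leq_addr _ _) hc).
rewrite /stepR; case: ifP => xC.
  have xA : x \in avail X by rewrite EC in xC; exact: (subsetP (scc_sub _ _ _) _ xC).
  move: hc; rewrite (_ : x \notin letters X) ?addn1; last by move: xA; rewrite inE.
  move=> hc.
  have cpos : 0 < cr (fR X) by lia.
  have na := cr_pos_nonacyc cpos.
  have sc : strongly_connected e (fR X) by rewrite EC; exact: scc_sc.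
  have nd := nonacyc_del Hirr x na.
  have [u' u'C [E c]] := pickD_spec nd.
  have cle := cr_sc_le sc na xC.
  split.
  - by rewrite E; apply/set0Pn; exists u'; exact: scc_self.
  - exists u'.
      move: u'C; rewrite !in_setD1 => /andP[-> h] /=.
      by rewrite EC in h; exact: (subsetP (scc_sub _ _ _) _ h).
    by rewrite E EC scc_del_in // -EC.
  - lia.
have xn : x \notin scc (avail X) u by rewrite -EC xC.
split => //.
- exists u; last by rewrite EC scc_remove.
  rewrite in_setD1 uA andbT.
  by apply: contraNneq xn => <-; exact: scc_self.
- lia.
Qed.


Lemma unique_cl A u0 : u0 \in A -> unique_initial e (cl A (scc A u0)).
Proof.
move=> u0A; set C := scc A u0; set R := cl A C.
have CA : C \subset A by exact: scc_sub.
have u0C : u0 \in C by exact: scc_self.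
have clr : forall c v, c \in C -> reachS A c v -> reachS R c v.
  move=> c v cC rv; apply: (reach_restrict (S := A)) rv => //.
  - move=> a b rca aR bA eab; apply: (cl_reach aR); exact: reachS_edge (reachS_in rca).2 bA eab.
  - exact: cl_self.
  - exact: cl_sub.
have RA : R \subset A by exact: cl_sub.
have CR : C \subset R by apply/subsetP=> c cC; exact: cl_self.
have u0c : forall c, c \in C -> reachS R u0 c.
  by move=> c cC; apply: (reachS_sub CR); apply: scc_path.
have u0R : u0 \in R by exact: (subsetP CR).
have reach_from : forall z, z \in R -> reachS R u0 z.
  move=> z; rewrite in_cl => /existsP[c /andP[cC rcz]].
  exact: reachS_trans (u0c c cC) (clr c z cC rcz).
exists (scc R u0); split.
  split; first by exists u0.
  move=> a b aR aC bC; apply/negP=> eab; move: aC; rewrite in_scc.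
  apply/negP; rewrite negbK; apply/andP; split; first exact: reach_from.
  have bR : b \in R by move: bC; rewrite in_scc => /sconn_in[].
  apply: reachS_trans (reachS_edge aR bR eab) _.
  by move: bC; rewrite in_scc => /andP[].
move=> C' [[u' u'R EC'] noe].
have u'C' : u' \in C' by rewrite EC'; exact: scc_self.
have u0C' : u0 \in C'.
  apply: NNPP => nu0; have := reach_exit (K := ~: C') (reach_from _ u'R).
  rewrite !inE negbK => /(_ (introT negP nu0) u'C') [a [b [aC bC aR bR eab]]].
  by move: aC bC; rewrite !inE negbK => aC bC; move: (noe a b aR aC bC); rewrite eab.
have h0 : u0 \in scc R u' by rewrite -EC'.
by rewrite EC' (scc_eq h0).
Qed.

Definition Rr g X := match g with Gi | Gv => cl (avail X) (fR X) | Gisc | Gvsc => fR X end.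

Lemma fR_sub X : #|letters X| <= r -> fR X \subset avail X.
Proof. by case/fR_inv => _ [u _ ->] _; exact: scc_sub. Qed.

Lemma Rr_ne g X : #|letters X| <= r -> Rr g X != set0.
Proof.
move=> h; have [/set0Pn[w wF] _ _] := fR_inv h; apply/set0Pn; exists w.
by case: g => //=; apply: cl_self => //; exact: fR_sub.
Qed.

Lemma Rr_pos g X : #|letters X| <= r -> position e g X (Rr g X).
Proof.
move=> h; have [ne [u uA EC] _] := fR_inv h; case: g => /=.
- by split; [exact: cl_sub | exact: cl_succ].
- split; first exact: fR_sub.
  move=> a b; rewrite EC !in_scc; exact: sconn_trans.
- split; first exact: cl_sub.
  right; split; first exact: cl_succ.
  rewrite EC; exact: unique_cl.
- by split; [exact: fR_sub | right; exists u].
Qed.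

Lemma letters_prefix P L : prefix P L -> letters P \subset letters L.
Proof.
case/prefixP=> Y ->; apply/subsetP=> y; rewrite !inE mem_cat => ->; by [].
Qed.

Lemma Rr_gsucc g X R X' : #|letters X| <= r -> #|letters X'| <= r ->
  (R = Rr g X \/ (X = [::] /\ R = setT)) -> validmove X X' -> gsucc e g (X, R) (X', Rr g X').
Proof.
move=> hX hX' hR v; move: (v) => /andP[pp /eqP c1]; split => //; first exact: Rr_pos.
have [P [Y [EX [lP lL]]]] : exists P Y, (X = P /\ X' = P ++ Y \/ X' = P /\ X = P ++ Y) /\
    (letters P \subset letters X /\ letters P \subset letters X').
  case/orP: pp => pp; case/prefixP: pp => Y EY.
    exists X, Y; split; first by left.
    by rewrite EY; split; [exact: subxx | apply: letters_prefix; exact: prefix_prefix].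
  exists X', Y; split; first by right.
  by rewrite EY; split; [apply: letters_prefix; exact: prefix_prefix | exact: subxx].
have ES : ~: (letters X :&: letters X') = avail P.
  by case: EX => -[-> ->]; [rewrite (setIidPl (letters_prefix (prefix_prefix _ _)))
                            |rewrite (setIidPr (letters_prefix (prefix_prefix _ _)))].
rewrite ES.
have subX : fR X \subset fR P.
  by case: EX => -[E1 E2]; [rewrite E1 subxx | rewrite E2 fR_prefix].
have subX' : fR X' \subset fR P.
  by case: EX => -[E1 E2]; [rewrite E2 fR_prefix | rewrite E1 subxx].
have hP : #|letters P| <= r by apply: leq_trans (subset_leq_card lP) hX.
have [_ [uP uPA EP] _] := fR_inv hP.
have avX' : avail X' \subset avail P by rewrite setCS.
move=> S v' v'R; rewrite /S.
case: hR => [ER|[E0 ET]]; last first.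
  have v'P : v' \in avail P by rewrite -ES E0 !inE.
  rewrite ET; exists v'; first by rewrite in_setT.
  by case: g v'R => /= v'R; [exact: reachS_refl|exact: sconn_refl|exact: reachS_refl|exact: sconn_refl].
have [/set0Pn[w wX] _ _] := fR_inv hX.
have wP : w \in scc (avail P) uP by rewrite -EP (subsetP subX).
case: g ER v'R => /= ER v'R.
- exists w; first by rewrite ER /=; apply: cl_self => //; exact: fR_sub.
  have [u uF ru] : exists2 u, u \in fR X' & reachS (avail X') u v'
    by move: v'R; rewrite in_cl => /existsP[u /andP[uF ru]]; exists u.
  have uP' : u \in scc (avail P) uP by rewrite -EP (subsetP subX').
  apply: reachS_trans (reachS_sub avX' ru); by case/andP: (scc_sconn wP uP').
- exists w; first by rewrite ER.
  have v'P : v' \in scc (avail P) uP by rewrite -EP (subsetP subX').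
  exact: scc_sconn wP v'P.
- exists w; first by rewrite ER /=; apply: cl_self => //; exact: fR_sub.
  have [u uF ru] : exists2 u, u \in fR X' & reachS (avail X') u v'
    by move: v'R; rewrite in_cl => /existsP[u /andP[uF ru]]; exists u.
  have uP' : u \in scc (avail P) uP by rewrite -EP (subsetP subX').
  apply: reachS_trans (reachS_sub avX' ru); by case/andP: (scc_sconn wP uP').
- exists w; first by rewrite ER.
  have v'P : v' \in scc (avail P) uP by rewrite -EP (subsetP subX').
  exact: scc_sconn wP v'P.
Qed.

End Robber.

Lemma ar1 (a b c d r : nat) : a + b <= r -> b = c.+1 -> d <= c -> a.+1 + d <= r.
Proof. lia. Qed.

Section UB.
Variables (T : finType) (e : rel T).
Hypothesis Hirr : irreflexive e.
Variable x0 : T.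
Implicit Types (S K R A B C : {set T}) (u v w x y : T) (X Y P : seq T).
Notation cr := (cr e).
Notation scc := (scc e).
Notation reachS := (reachS e).
Notation sconn := (sconn e).

Lemma sig_special g rule X R : special e g (X, R) -> sigma_of e x0 g rule X R = [::].
Proof. by rewrite /sigma_of => sp; destruct (excluded_middle_informative _) as [a|b]. Qed.

Lemma sig_empty g rule X : ~ special e g (X, set0) -> sigma_of e x0 g rule X set0 = emove x0 X.
Proof.
rewrite /sigma_of => ns; destruct (excluded_middle_informative _) as [a|b] => //.
by rewrite eqxx.
Qed.

Lemma sig_rule g rule X R : ~ special e g (X, R) -> R != set0 -> validmove X (rule X R) ->
  sigma_of e x0 g rule X R = rule X R.
Proof.
rewrite /sigma_of => ns nR v; destruct (excluded_middle_informative _) as [a|b] => //.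
by rewrite (negbTE nR) v.
Qed.

Definition opt K : T :=
  if [pick v in K] is Some v0 then [arg min_(v < v0 in K) cr (K :\ v)] else x0.

Lemma opt_spec K : K != set0 -> opt K \in K /\ forall v, v \in K -> cr (K :\ opt K) <= cr (K :\ v).
Proof.
move=> nK; rewrite /opt; case: pickP => [v0 v0K|H].
  by case: arg_minnP.
by case/set0Pn: nK => x xK; move: (H x); rewrite xK.
Qed.

Lemma opt_cr K : strongly_connected e K -> ~~ acyclicS e K -> cr K = (cr (K :\ opt K)).+1.
Proof.
move=> sc na; have nK := nonacyc_nonempty na.
have [oK om] := opt_spec nK.
have [v vK E] := cr_sc_ex sc na.
apply/eqP; rewrite eqn_leq (cr_sc_le sc na oK) /= E ltnS; exact: om v vK.
Qed.

Lemma letters_prefix_sub X X' : prefix X X' -> ~: (letters X :&: letters X') = avail X.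
Proof. by move=> p; rewrite (setIidPl (letters_prefix p)). Qed.

Lemma special_pos g X R : special e g (X, R) -> ~ position e g X R.
Proof. by case=> _ [[-> ->]]. Qed.

Lemma gsucc_empty g X X' R' : gsucc e g (X, set0) (X', R') -> R' = set0.
Proof.
case=> _ _ _ h; apply/setP=> v; rewrite in_set0; apply/negP=> vR.
by have [w] := h v vR; rewrite in_set0.
Qed.

Lemma succ_nonspecial g X R X' R' : ~ special e g (X, R) -> succ e g (X, R) (X', R') ->
  gsucc e g (X, R) (X', R').
Proof. by move=> ns [_ h]; exact: h. Qed.

Variable r : nat.
Hypothesis Hr : r = cr setT.

Definition ruleV X R := rcons X (opt R).
Definition sigV := sigma_of e x0 Gvsc ruleV.
Definition InvV X R := size X <= r.+1 /\ (R != set0 -> size X + cr R <= r).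

Lemma stepV X R X' R' : (position e Gvsc X R \/ special e Gvsc (X, R)) -> InvV X R ->
  succ e Gvsc (X, R) (X', R') -> X' = sigV X R ->
  [/\ InvV X' R', R' \subset R & (position e Gvsc X R -> R != set0 -> #|R'| < #|R|)].
Proof.
move=> pp [i1 i2] sc EX'.
case: (classic (special e Gvsc (X, R))) => [sp|ns].
  have [EX ER] : X = [::] /\ R = setT by case: (special_T sp).
  have [E1 pos1] := sc.1 sp; rewrite /= in E1 pos1; subst X R; rewrite E1 in pos1 *.
  split; last by move=> /(special_pos sp).
  - split => // nR; case: pos1 => _ [E|[u uA ->]]; first by rewrite E eqxx in nR.
    have EA : avail ([::] : seq T) = setT by apply/setP=> y; rewrite !inE.
    by rewrite add0n Hr -EA; apply: cr_scc_le.
  - exact: subsetT.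
have gs := succ_nonspecial ns sc.
case: (eqVneq R set0) => [ER|nR].
  subst R; have -> := gsucc_empty gs; split => //.
  rewrite EX' /sigV sig_empty //; split; last by rewrite eqxx.
  by apply: leq_trans (size_emove x0 X) _; rewrite geq_max i1.
case: pp => [pos|//].
have [RA [ER|[u uA ER]]] := pos; first by rewrite ER eqxx in nR.
have [oR _] := opt_spec nR.
have oA : opt R \in avail X by exact: (subsetP RA).
have ov : validmove X (ruleV X R) by apply: push_valid; move: oA; rewrite inE.
have EX'' : X' = rcons X (opt R) by rewrite EX' /sigV sig_rule.
rewrite EX'' in EX'; subst X'; case: gs => pos' _ _ hr; rewrite letters_prefix_sub ?prefix_rcons // in hr.
have sub : R' \subset R.
  apply/subsetP=> v' /hr [v vR sv]; rewrite ER in vR *; rewrite in_scc in vR *.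
  rewrite in_scc; exact: sconn_trans vR sv.
have oR' : opt R \notin R'.
  apply/negP=> h; have := subsetP pos'.1 _ h; by rewrite avail_rcons !inE eqxx.
have ltR : #|R'| < #|R|.
  apply: proper_card; rewrite properE sub /=; apply/subsetPn; exists (opt R) => //.
split => //; split; first by rewrite size_rcons ltnS; apply: leq_trans (leq_addr _ _) (i2 nR).
move=> nR'; case: pos' => _ [E|[u' u'A ER']]; first by rewrite E eqxx in nR'.
have u'R : u' \in R' by rewrite ER'; exact: scc_self.
have u'Ro : u' \in R :\ opt R.
  by rewrite in_setD1 (subsetP sub _ u'R) andbT; apply: contraNneq oR' => <-.
have sc' : strongly_connected e R by rewrite ER; exact: scc_sc.
have na : ~~ acyclicS e R.
  apply/negP=> a; have := sc_acyc_eq sc' a oR (subsetP sub _ u'R).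
  by move: u'Ro; rewrite in_setD1 => /andP[/eqP ne _] /esym.
have E1 : R' = scc (R :\ opt R) u'.
  by rewrite ER' avail_rcons; symmetry; rewrite {1}ER scc_del_in // -ER.
have c1 : cr R' <= cr (R :\ opt R) by rewrite E1; exact: cr_scc_le.
have c2 := opt_cr sc' na.
rewrite size_rcons; exact: ar1 (i2 nR) c2 c1.
Qed.

Lemma ubV : [/\ winning e Gvsc sigV, monotone e Gvsc sigV, uses_at_most e Gvsc sigV r.+1
              & searcher_stationary e Gvsc sigV].
Proof.
have I0 : InvV [::] setT by split => // _; rewrite Hr.
have [w m u] := generic_ub I0 stepV (c := r.+1) (fun X R h => h.1).
split => // len s pl i hi nR.
have [_ pp _ _] := play_inv I0 stepV pl (in_range_pred hi).
case: pl => [[s0 hs] hc _]; rewrite (hc i hi).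
rewrite [s i]surjective_pairing /= in pp nR *.
case: (classic (special e Gvsc ((s i).1, (s i).2))) => [sp|ns].
  by rewrite /sigV sig_special //; have [-> _] := special_T sp.
case: pp => // pos.
have [oR _] := opt_spec nR.
have oA : opt (s i).2 \in avail (s i).1 by exact: (subsetP pos.1).
rewrite /sigV sig_rule //; first exact: prefix_rcons.
by apply: push_valid; move: oA; rewrite inE.
Qed.

End UB.

Lemma ar_push (qa qb k s : nat) : qa < qb -> qa * k.+2 + s.+1 < qb * k.+2 + s.
Proof. move=> h; have := leq_mul h (leqnn k.+2); rewrite mulSn; lia. Qed.
Lemma ar_pop (qa qb k s : nat) : qa <= qb -> qa * k + s < qb * k + s.+1.
Proof. move=> h; have := leq_mul h (leqnn k); lia. Qed.

Section Chain.
Variables (T : finType) (e : rel T).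
Hypothesis Hirr : irreflexive e.
Variable x0 : T.
Implicit Types (S K R A B C F Q : {set T}) (u v w x y : T) (X Y P : seq T).
Notation cr := (cr e).
Notation scc := (scc e).
Notation reachS := (reachS e).
Notation sconn := (sconn e).
Notation opt := (opt e x0).
Notation cl := (cl e).
Variable r : nat.
Hypothesis Hr : r = cr setT.

Definition relg g S v v' := match g with Gi | Gv => reachS S v v' | Gisc | Gvsc => sconn S v v' end.

Lemma relg_closed g X R v v' : position e g X R -> v \in R -> relg g (avail X) v v' -> v' \in R.
Proof.
case=> RA; case: g => /= H vR.
- move=> rv; apply: (reach_ind (P := fun z => z \in R)) rv => // a b aR _ bA eab.
  exact: H a b aR bA eab.
- exact: H.
- case: H => [ER|[H _]]; first by rewrite ER in_set0 in vR.
  move=> rv; apply: (reach_ind (P := fun z => z \in R)) rv => // a b aR _ bA eab.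
  exact: H a b aR bA eab.
- case: H => [ER|[u uA ER]]; first by rewrite ER in_set0 in vR.
  by move: vR; rewrite ER !in_scc; exact: sconn_trans.
Qed.

Lemma reach_pop S x R u v : R \subset S :\ x ->
  (forall a, a \in cl (S :\ x) R -> ~~ e a x) ->
  u \in cl (S :\ x) R -> reachS S u v -> reachS (S :\ x) u v.
Proof.
move=> RA noe uQ ruv; apply: (reach_ind (P := fun z => reachS (S :\ x) u z)) ruv; last first.
  by apply: reachS_refl; exact: (subsetP (cl_sub _ _ _) _ uQ).
move=> a b rua aS bS eab.
have aQ : a \in cl (S :\ x) R by exact: cl_reach uQ rua.
have bA : b \in S :\ x.
  rewrite in_setD1 bS andbT; apply: contraNneq (noe a aQ) => <-; by [].
exact: reachS_trans rua (reachS_edge (reachS_in rua).2 bA eab).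
Qed.

Lemma relg_pop g S x R v v' : R \subset S :\ x ->
  (forall a, a \in cl (S :\ x) R -> ~~ e a x) ->
  v \in R -> relg g S v v' -> relg g (S :\ x) v v'.
Proof.
move=> RA noe vR; have vQ : v \in cl (S :\ x) R by exact: cl_self.
case: g => /=; try (exact: reach_pop RA noe vQ).
- case/andP=> a b; have a' := reach_pop RA noe vQ a; rewrite /Defs.sconn a' /=.
  apply: reach_pop RA noe _ b; exact: cl_reach vQ a'.
- case/andP=> a b; have a' := reach_pop RA noe vQ a; rewrite /Defs.sconn a' /=.
  apply: reach_pop RA noe _ b; exact: cl_reach vQ a'.
Qed.

Lemma cl_mono A A' R R' : A' \subset A -> R' \subset R -> cl A' R' \subset cl A R.
Proof.
move=> sA sR; apply/subsetP=> v; rewrite !in_cl => /existsP[u /andP[uR ru]].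
by apply/existsP; exists u; rewrite (subsetP sR _ uR) (reachS_sub sA ru).
Qed.

Definition stepC (o : option {set T}) x : option {set T} :=
  if o is Some F then
    (if (x \in F) && (opt (scc F x) == x) then Some (scc F x :\ x) else None)
  else None.
Definition chainF X := foldl stepC (Some setT) X.

Lemma chainF_rcons X x : chainF (rcons X x) = stepC (chainF X) x.
Proof. by rewrite /chainF foldl_rcons. Qed.

Lemma chainF_rcons_inv X x F : chainF (rcons X x) = Some F -> exists Fp,
  [/\ chainF X = Some Fp, x \in Fp, opt (scc Fp x) = x & F = scc Fp x :\ x].
Proof.
rewrite chainF_rcons; case: (chainF X) => [Fp|] //=.
case: ifP => // /andP[xF /eqP o] [<-]; by exists Fp.
Qed.

Lemma chainF_sub X F : chainF X = Some F -> F \subset avail X.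
Proof.
elim/last_ind: X F => [|X x IH] F.
  by move=> [<-]; apply/subsetP=> y _; rewrite !inE.
case/chainF_rcons_inv=> Fp [cF xF _ ->]; rewrite avail_rcons.
apply: setSD; apply: subset_trans (IH _ cF); exact: scc_sub.
Qed.

Lemma chainF_size X F : chainF X = Some F -> size X <= r.+1 /\ (F != set0 -> size X + cr F <= r).
Proof.
elim/last_ind: X F => [|X x IH] F.
  by move=> [<-]; split => // _; rewrite Hr.
case/chainF_rcons_inv=> Fp [cF xF o ->]; have [s1 s2] := IH _ cF.
have nFp : Fp != set0 by apply/set0Pn; exists x.
have c1 : cr (scc Fp x) <= cr Fp by exact: cr_scc_le.
have h := s2 nFp; rewrite size_rcons; split; first lia.
move=> nF; have xK : x \in scc Fp x by exact: scc_self.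
have sc : strongly_connected e (scc Fp x) by exact: scc_sc.
have na : ~~ acyclicS e (scc Fp x).
  case/set0Pn: nF => y; rewrite in_setD1 => /andP[yx yK]; apply/negP => a.
  by move: yx; rewrite (sc_acyc_eq sc a yK xK) eqxx.
have := @opt_cr _ e x0 _ sc na; rewrite o; lia.
Qed.

Definition noinv X Q : Prop := forall P x Y Fp, X = P ++ x :: Y -> chainF P = Some Fp ->
  forall a b, a \in Q -> a \notin scc Fp x -> b \in scc Fp x -> ~~ e a b.

Lemma noinv_mono X Q Q' : Q' \subset Q -> noinv X Q -> noinv X Q'.
Proof. by move=> s h P x Y Fp E c a b aQ; apply: h E c a b (subsetP s _ aQ). Qed.

Lemma noinv_nil Q : noinv [::] Q.
Proof. by move=> [|? ?] ? ?. Qed.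

Lemma rcons_decomp X z P x Y : rcons X z = P ++ x :: Y ->
  (Y = [::] /\ P = X /\ x = z) \/ (exists Y', Y = rcons Y' z /\ X = P ++ x :: Y').
Proof.
case/lastP: Y => [|Y' y].
  by rewrite cats1 => /rcons_inj [-> ->]; left.
rewrite -rcons_cons -rcons_cat => /rcons_inj [-> ->]; right; by exists Y'.
Qed.

Lemma a_in_F X F Q a b : chainF X = Some F -> noinv X Q -> Q \subset avail X ->
  a \in Q -> b \in F -> e a b -> a \in F.
Proof.
case/lastP: X => [|X xj].
  by move=> [<-]; rewrite in_setT.
move=> cF ni QA aQ bF eab; have [Fp [cFp xF o EF]] := chainF_rcons_inv cF.
have aK : a \in scc Fp xj.
  apply: contraT => aK; have := ni X xj [::] Fp (esym (cats1 _ _)) cFp a b aQ aK.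
  by rewrite eab; apply; move: bF; rewrite EF in_setD1 => /andP[].
rewrite EF in_setD1 aK andbT; apply/eqP => axj.
by move: (subsetP QA _ aQ); rewrite axj avail_rcons !inE eqxx.
Qed.

Definition anc F q := [set a | reachS F a q].

Definition qmin F Q : T :=
  if [pick q in Q :&: F] is Some q0 then [arg min_(q < q0 in Q :&: F) #|anc F q|] else x0.

Lemma qmin_spec F Q : Q :&: F != set0 ->
  qmin F Q \in Q :&: F /\ forall q, q \in Q :&: F -> #|anc F (qmin F Q)| <= #|anc F q|.
Proof.
move=> n; rewrite /qmin; case: pickP => [q0 q0Q|H]; first by case: arg_minnP.
by case/set0Pn: n => x xQ; move: (H x); rewrite xQ.
Qed.

Definition ruleC X R : seq T :=
  if chainF X is Some F then
    (if cl (avail X) R :&: F != set0 then rcons X (opt (scc F (qmin F (cl (avail X) R))))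
     else popw X)
  else X.


Variable g : gvar.
Definition sigC := sigma_of e x0 g ruleC.
Definition InvC X R := size X <= r.+1 /\
  (R != set0 -> exists F, chainF X = Some F /\ noinv X (cl (avail X) R)).
Definition mC X R := #|cl (avail X) R| * r.+2 + size X.

Lemma gsucc_rel X R X' R' : gsucc e g (X, R) (X', R') ->
  forall v', v' \in R' -> exists2 v, v \in R & relg g (~: (letters X :&: letters X')) v v'.
Proof. case=> _ _ _ h v' vR'; move: (h v' vR') => [w wR hw]; exists w => //; case: g hw. all: by []. Qed.

Lemma stepC_ok X R X' R' : (position e g X R \/ special e g (X, R)) -> InvC X R ->
  succ e g (X, R) (X', R') -> X' = sigC X R ->
  [/\ InvC X' R', R' \subset R & (position e g X R -> R != set0 -> mC X' R' < mC X R)].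
Proof.
move=> pp [i1 i2] sc EX'.
case: (classic (special e g (X, R))) => [sp|ns].
  have [EX ER] : X = [::] /\ R = setT by case: (special_T sp).
  have [E1 pos1] := sc.1 sp; rewrite /= in E1 pos1; subst X R; rewrite E1 in pos1 *.
  split; last by move=> /(special_pos sp).
  - split => // _; exists setT; split => //; exact: noinv_nil.
  - exact: subsetT.
have gs := succ_nonspecial ns sc.
case: (eqVneq R set0) => [ER|nR].
  subst R; have -> := gsucc_empty gs; split => //.
  rewrite EX' /sigC sig_empty //; split; last by rewrite eqxx.
  by have := size_emove x0 X; lia.
case: pp => [pos|//].
have RA := pos.1.
have [F [cF ni]] := i2 nR.
set Q := cl (avail X) R in ni *.
have QA : Q \subset avail X by exact: cl_sub.
have RQ : R \subset Q by apply/subsetP=> v vR; exact: cl_self.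
have FA := chainF_sub cF.
have hr := gsucc_rel gs.
case: (boolP (Q :&: F != set0)) => QF.
  have [qQF qmin_min] := qmin_spec QF.
  set q := qmin F Q in qQF qmin_min.
  have qF : q \in F by move: qQF; rewrite inE => /andP[].
  have qQ : q \in Q by move: qQF; rewrite inE => /andP[].
  set D := scc F q.
  have nD : D != set0 by apply/set0Pn; exists q; exact: scc_self.
  have [oD _] := @opt_spec _ e x0 _ nD.
  set xo := opt D in oD.
  have xoF : xo \in F by exact: (subsetP (scc_sub _ _ _) _ oD).
  have xoA : xo \in avail X by exact: (subsetP FA).
  have v : validmove X (ruleC X R).
    by rewrite /ruleC cF QF; apply: push_valid; move: xoA; rewrite inE.
  have EX'' : X' = rcons X xo by rewrite EX' /sigC sig_rule // /ruleC cF QF.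
  rewrite EX'' in EX' gs hr *; clear EX'.
  rewrite letters_prefix_sub ?prefix_rcons // in hr.
  have sub : R' \subset R.
    by apply/subsetP=> v' /hr [w wR hw]; exact: relg_closed pos wR hw.
  have DE : scc F xo = D by rewrite /D; apply: scc_eq.
  have cF' : chainF (rcons X xo) = Some (D :\ xo).
    by rewrite chainF_rcons cF /= xoF DE eqxx.
  have Q'Q : cl (avail (rcons X xo)) R' \subset Q.
    by apply: cl_mono => //; rewrite avail_rcons; exact: subD1set.
  have xoQ : xo \in Q.
    apply: (cl_reach qQ); apply: (reachS_sub FA).
    by have /andP[] := scc_sconn (scc_self _ qF) oD.
  have xoQ' : xo \notin cl (avail (rcons X xo)) R'.
    apply/negP=> h; have := subsetP (cl_sub _ _ _) _ h; by rewrite avail_rcons !inE eqxx.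
  split => //.
  - split; first by have [] := chainF_size cF'.
    move=> _; exists (D :\ xo); split => //.
    move=> P x Y Fp E cP a b aQ' aK bK.
    case: (rcons_decomp E) => [[EY [EP Ex]]|[Y' [EY EX]]]; last first.
      exact: ni EX cP a b (subsetP Q'Q _ aQ') aK bK.
    subst P x; rewrite cF in cP; case: cP => <- in aK bK *.
    rewrite DE in aK bK; apply/negP => eab.
    have aQ := subsetP Q'Q _ aQ'.
    have bF : b \in F by exact: (subsetP (scc_sub _ _ _) _ bK).
    have aF := a_in_F cF ni QA aQ bF eab.
    have aQF : a \in Q :&: F by rewrite inE aQ aF.
    have := qmin_min a aQF; apply/negP; rewrite -ltnNge.
    apply: proper_card; rewrite properE; apply/andP; split.
      apply/subsetP=> z; rewrite !inE => rza; apply: reachS_trans rza _.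
      apply: reachS_trans (reachS_edge aF bF eab) _.
      by have /andP[] := scc_sconn bK (scc_self _ qF).
    apply/subsetPn; exists q; first by rewrite inE; exact: reachS_refl.
    rewrite inE; apply/negP => rqa; move: aK; apply/negP; rewrite negbK /D in_scc.
    rewrite /Defs.sconn rqa /=; apply: reachS_trans (reachS_edge aF bF eab) _.
    by have /andP[] := scc_sconn bK (scc_self _ qF).
  - move=> _ _; rewrite /mC size_rcons.
    have lt : #|cl (avail (rcons X xo)) R'| < #|Q|.
      apply: proper_card; rewrite properE Q'Q /=; apply/subsetPn; by exists xo.
    exact: ar_push.
have XnE : X != [::].
  apply/negP=> /eqP EX; subst X; move: cF => [EF]; move: QF; rewrite -EF setIT negbK => /eqP QE.
  by case/set0Pn: nR => v vR; move: (subsetP RQ _ vR); rewrite QE in_set0.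
have [P [xj EX]] : exists P xj, X = rcons P xj.
  by clear -XnE; case/lastP: X XnE => // P xj _; exists P, xj.
subst X.
have [Fp [cFp xjF o EF]] := chainF_rcons_inv cF.
have xjP : xj \notin letters P by have := subsetP (chainF_sub cFp) _ xjF; rewrite inE.
have v : validmove (rcons P xj) (ruleC (rcons P xj) R).
  by rewrite /ruleC cF (negbTE QF); apply: popw_valid; case: (P).
have EX'' : X' = P by rewrite EX' /sigC sig_rule // /ruleC cF (negbTE QF) popw_rcons.
rewrite EX'' in gs hr *; clear EX'.
have pre : prefix P (rcons P xj) by exact: prefix_rcons.
rewrite (setIidPr (letters_prefix pre)) in hr.
have noe : forall a, a \in cl (avail P :\ xj) R -> ~~ e a xj.
  move=> a aQ; rewrite -avail_rcons in aQ.
  apply: (ni P xj [::] Fp (esym (cats1 _ _)) cFp a xj aQ); last exact: scc_self.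
  apply/negP=> aK; have aA := subsetP QA _ aQ.
  have axj : a != xj by apply/eqP=> E; move: aA; rewrite E avail_rcons !inE eqxx.
  have : a \in Q :&: F by rewrite inE aQ EF in_setD1 axj aK.
  by move/set0Pn: (negbNE QF) => _; rewrite (eqP (negbNE QF)) in_set0.
have RA' : R \subset avail P :\ xj by rewrite -avail_rcons.
have sub : R' \subset R.
  apply/subsetP=> v' /hr [w wR hw]; apply: (relg_closed pos wR).
  by rewrite avail_rcons; exact: relg_pop RA' noe wR hw.
have Q'Q : cl (avail P) R' \subset Q.
  apply/subsetP=> z; rewrite in_cl => /existsP[u /andP[uR' ruz]].
  have uR := subsetP sub _ uR'.
  have uQ : u \in cl (avail P :\ xj) R by exact: cl_self.
  rewrite /Q avail_rcons; apply: (cl_reach uQ); exact: (reach_pop RA' noe uQ ruz).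
split => //.
- split; first by have [] := chainF_size cFp.
  move=> _; exists Fp; split => //; apply: noinv_mono Q'Q _.
  move=> P1 x Y Fq E cP; apply: ni cP; by rewrite E -cats1 -catA.
- move=> _ _; rewrite /mC size_rcons.
  apply: ar_pop; exact: subset_leq_card.
Qed.

Lemma ubC : [/\ winning e g sigC, monotone e g sigC & uses_at_most e g sigC r.+1].
Proof.
have I0 : InvC [::] setT by split => // _; exists setT; split => //; exact: noinv_nil.
exact: (generic_ub I0 stepC_ok (c := r.+1) (fun X R h => h.1)).
Qed.

End Chain.

Lemma letters_size (T : finType) (X : seq T) : #|letters X| <= size X.
Proof. by rewrite cardsE card_size. Qed.

Lemma lower_bound (T : finType) (e : rel T) (Hirr : irreflexive e) (x0 : T) g sig k :
  strategy e g sig -> winning e g sig -> uses_at_most e g sig k -> (cr e setT).+1 <= k.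
Proof.
move=> Hs Hw Hu; case: (leqP (cr e setT).+1 k) => // hk; exfalso.
have Hr : cr e setT = cr e setT by [].
have hl : forall X : seq T, size X <= k -> #|letters X| <= cr e setT.
  by move=> X h; apply: leq_trans (letters_size X) _; lia.
apply: (generic_lb (Rr := Rr e g) x0 Hs Hw Hu).
- by move=> X h; apply: (Rr_ne Hirr Hr x0); exact: hl.
- move=> _; apply: (Rr_pos Hirr Hr x0); exact: hl.
- move=> X R X' h1 h2 hR _ v; apply: (Rr_gsucc Hirr Hr x0) => //; exact: hl.
Qed.

Theorem theorem1 (T : finType) (e : rel T) (Hirr : irreflexive e) (Hne : 0 < #|T|) :
  let c := (cycle_rank e).+1 in
  lifo_is e Gi true c /\ lifo_is e Gi false c /\
  lifo_is e Gisc true c /\ lifo_is e Gisc false c /\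
  lifo_is e Gv true c /\ lifo_is e Gv false c /\
  lifo_is e Gvsc true c /\ lifo_is e Gvsc false c /\
  sstat_is e c.
Proof.
move=> c; case/card_gt0P: Hne => x0 _.
have Er : cycle_rank e = cr e setT by rewrite /cycle_rank /cr cardsT.
have Hr : cr e setT = cr e setT by [].
have lbm : forall g (mono : bool) k,
    (exists sigma, [/\ strategy e g sigma, winning e g sigma,
                    (mono = true -> monotone e g sigma) & uses_at_most e g sigma k]) -> c <= k.
  move=> g mono k [sig [Hs Hw _ Hu]]; rewrite /c Er; exact: lower_bound Hs Hw Hu.
have ubCg : forall g mono, g <> Gvsc -> lifo_is e g mono c.
  move=> g mono _; split; last by move=> k; exact: lbm.
  have [w m u] := ubC x0 Hr g; exists (sigC e x0 g); split => //.
    exact: sigma_strategy.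
  by rewrite /c Er.
have [wV mV uV sV] := ubV x0 Hr.
have ubVg : forall mono, lifo_is e Gvsc mono c.
  move=> mono; split; last by move=> k; exact: lbm.
  exists (sigV e x0); split => //; first exact: sigma_strategy.
  by rewrite /c Er.
split; first exact: ubCg.
split; first exact: ubCg.
split; first exact: ubCg.
split; first exact: ubCg.
split; first exact: ubCg.
split; first exact: ubCg.
split; first exact: ubVg.
split; first exact: ubVg.
split.
  exists (sigV e x0); split => //; first exact: sigma_strategy.
  by rewrite /c Er.
move=> k [sig [Hs Hw _ Hu]]; rewrite /c Er; exact: lower_bound Hs Hw Hu.
Qed.
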